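(* Let $n=2k$ be a positive even integer, $\theta=\frac{2\pi}{n+2}$, and let $\mathcal{N}=\{(\ell_j,r_j): j\in[1:n]\}$ be given by $$\ell_{2i}=\ell_{2i-1}=\frac{2\sin\theta\,\sin(i\theta)}{\cos(i\theta)-\cos((i+1)\theta)},\qquad r_{2i}=r_{2i-1}=\frac{2\sin\theta\,\sin(i\theta)}{\cos((i-1)\theta)-\cos(i\theta)},\qquad i\in[1:k].$$ Then all $\ell_j,r_j$ are positive, $\ell_1\le\cdots\le\ell_n$, $r_1\ge\cdots\ge r_n$, $\mathsf{C}_1(\mathcal{N}_j)=1$ for every $j\in[1:n]$ (so $\mathsf{C}_1(\mathcal{N})=1$), and $\mathsf{C}_n(\mathcal{N})=2+2\cos\theta$. Consequently $\frac{\mathsf{C}_1(\mathcal{N})}{\mathsf{C}_n(\mathcal{N})}=\frac{1}{2+2\cos\left(\frac{2\pi}{n+2}\right)}$. Moreover, the rate $2+2\cos\theta$ is achieved by the schedule with $\lambda_{\{1,3,\dots,2k-1\}}=\lambda_{\{2,4,\dots,2k\}}=\frac12$ and $\lambda_{\mathcal{S}}=0$ otherwise.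
   Context: For a network $\mathcal{N}=\{(\ell_i,r_i): i\in[1:n]\}$ with nonnegative link capacities, with complements inside $[1:n]$ and maxima over empty sets equal to $0$, the approximate capacity is $\mathsf{C}_n(\mathcal{N})=\max_{\boldsymbol\lambda}\min_{\Omega\subseteq[1:n]}\sum_{\mathcal{S}\subseteq[1:n]}\lambda_{\mathcal{S}}\big(\max_{i\in\mathcal{S}^c\cap\Omega^c}\ell_i+\max_{i\in\mathcal{S}\cap\Omega}r_i\big)$, the maximum being over schedules $\boldsymbol\lambda=(\lambda_{\mathcal{S}})_{\mathcal{S}\subseteq[1:n]}$, $\lambda_{\mathcal{S}}\ge0$, $\sum_{\mathcal{S}}\lambda_{\mathcal{S}}=1$; the rate achieved by a fixed schedule is the inner minimum. $\mathsf{C}_1(\mathcal{N}_i)=\frac{\ell_ir_i}{\ell_i+r_i}$ and $\mathsf{C}_1(\mathcal{N})=\max_i\mathsf{C}_1(\mathcal{N}_i)$. *)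

(* Defs.v *)
From Stdlib Require Import Reals ClassicalEpsilon.
From mathcomp Require Import all_boot.
Set Implicit Arguments. Unset Strict Implicit. Unset Printing Implicit Defensive.
Local Open Scope R_scope.

(* Node j : 'I_n  stands for node j+1 of [1:n]. A network is given by the
   two capacity functions l r : 'I_n -> R. *)

Definition C1_link (l r : R) : R := (l * r / (l + r)).

Definition C1_net (n : nat) (l r : 'I_n -> R) : R :=
  \big[Rmax/0]_(i : 'I_n) C1_link (l i) (r i).

Definition is_schedule (n : nat) (lam : {set 'I_n} -> R) : Prop :=
  (forall S, 0 <= lam S) /\ \big[Rplus/0]_(S : {set 'I_n}) lam S = 1.

(* sum_S lambda_S ( max_{i in S^c cap Omega^c} l_i + max_{i in S cap Omega} r_i ),
   maxima over empty sets equal to 0, complements inside [1:n] *)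
Definition cut_value (n : nat) (l r : 'I_n -> R) (lam : {set 'I_n} -> R)
    (Om : {set 'I_n}) : R :=
  \big[Rplus/0]_(S : {set 'I_n})
     (lam S * (\big[Rmax/0]_(i in ~: S :&: ~: Om) l i
               + \big[Rmax/0]_(i in S :&: Om) r i)).

(* rate achieved by a fixed schedule: min over Omega (set0 is one of the
   Omegas, so starting the fold from its value gives exactly the minimum) *)
Definition rate (n : nat) (l r : 'I_n -> R) (lam : {set 'I_n} -> R) : R :=
  \big[Rmin/cut_value l r lam set0]_(Om : {set 'I_n}) cut_value l r lam Om.

Definition is_Cn (n : nat) (l r : 'I_n -> R) (c : R) : Prop :=
  (exists lam, is_schedule lam /\ rate l r lam = c) /\
  (forall lam, is_schedule lam -> (rate l r lam <= c)).

(* the approximate capacity C_n(N) (the maximum exists by compactness) *)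
Definition Cn_net (n : nat) (l r : 'I_n -> R) : R :=
  epsilon (inhabits 0) (is_Cn l r).

(* The network of the theorem, n = 2k, theta = 2 pi/(n+2);
   0-based node j corresponds to 1-based j+1, which is 2i-1 or 2i
   for i = j/2 + 1. *)
Definition theta (k : nat) : R := (2 * PI / INR (2 * k + 2)%N).

Definition ex_l (k : nat) (j : 'I_(2 * k)) : R :=
  let i := INR (j %/ 2 + 1)%N in let t := theta k in
  (2 * sin t * sin (i * t) / (cos (i * t) - cos ((i + 1) * t))).

Definition ex_r (k : nat) (j : 'I_(2 * k)) : R :=
  let i := INR (j %/ 2 + 1)%N in let t := theta k in
  (2 * sin t * sin (i * t) / (cos ((i - 1) * t) - cos (i * t))).

(* {1,3,...,2k-1} (0-based even nodes) and {2,4,...,2k} (0-based odd) *)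
Definition odd_nodes (k : nat) : {set 'I_(2 * k)} := [set j : 'I_(2 * k) | ~~ ssrnat.odd j].
Definition even_nodes (k : nat) : {set 'I_(2 * k)} := [set j : 'I_(2 * k) | ssrnat.odd j].

Definition alt_schedule (k : nat) (S : {set 'I_(2 * k)}) : R :=
  if S == odd_nodes k then (1/2)
  else if S == even_nodes k then (1/2) else 0.

(* Main.v *)
Require Import Defs.
From Stdlib Require Import Reals Lra Psatz ClassicalEpsilon.
From HB Require Import structures.
From mathcomp Require Import all_boot zify.
Local Open Scope R_scope.

Definition Ls (t x : R) := 2 * sin t * sin (x * t) / (cos (x * t) - cos ((x + 1) * t)).
Definition Rs (t x : R) := 2 * sin t * sin (x * t) / (cos ((x - 1) * t) - cos (x * t)).

Lemma ex_lE k (j : 'I_(2*k)) : ex_l j = Ls (theta k) (INR (j %/ 2 + 1)).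
Proof. reflexivity. Qed.
Lemma ex_rE k (j : 'I_(2*k)) : ex_r j = Rs (theta k) (INR (j %/ 2 + 1)).
Proof. reflexivity. Qed.

Lemma LR_sum t x : cos (x*t) - cos ((x+1)*t) <> 0 -> cos ((x-1)*t) - cos (x*t) <> 0 ->
  Ls t x + Rs t x = Ls t x * Rs t x.
Proof.
move=> h1 h0.
have key : (cos ((x-1)*t) - cos (x*t)) + (cos (x*t) - cos ((x+1)*t)) = 2 * sin t * sin (x*t).
{ replace ((x-1)*t) with (x*t - t) by ring. replace ((x+1)*t) with (x*t+t) by ring.
  rewrite cos_minus cos_plus. ring. }
rewrite /Ls /Rs -key. field. by split.
Qed.

Lemma LR_c t x : cos (x*t) - cos ((x+1)*t) <> 0 -> Ls t x + Rs t (x+1) = 2 + 2 * cos t.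
Proof.
move=> h. rewrite /Ls /Rs.
replace ((x+1-1)*t) with (x*t) by ring.
rewrite -Rdiv_plus_distr.
replace ((x+1)*t) with (x*t+t) in * by ring.
rewrite sin_plus cos_plus. rewrite cos_plus in h.
have E : 2 * sin t * sin (x * t) + 2 * sin t * (sin (x * t) * cos t + cos (x * t) * sin t)
   = (2 + 2 * cos t) * (cos (x * t) - (cos (x * t) * cos t - sin (x * t) * sin t))
     + 2 * cos (x*t) * (Rsqr (sin t) + Rsqr (cos t) - 1) by (unfold Rsqr; ring).
rewrite E sin2_cos2. field. exact h.
Qed.

Section T.
Variable k : nat.
Hypothesis hk : (0 < k)%N.
Let t := theta k.

Lemma theta_prop : 0 < t /\ (INR k + 1) * t = PI /\ 1 <= INR k.
Proof.
have E : INR (2 * k + 2) = 2 * INR k + 2.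
{ change (INR (Nat.add (Nat.mul 2 k) 2) = 2 * INR k + 2).
  rewrite plus_INR mult_INR. simpl. ring. }
have k1 : 1 <= INR k by apply (le_INR 1 k); apply/leP.
rewrite /t /theta E. split; last split; last done.
- apply Rdiv_lt_0_compat; have := PI_RGT_0; lra.
- field. lra.
Qed.

Lemma D_pos x : 0 <= x -> x <= INR k -> 0 < cos (x*t) - cos ((x+1)*t).
Proof.
move=> h0 h1. have [tp [tk k1]] := theta_prop.
have : cos ((x+1)*t) < cos (x*t); last lra.
apply cos_decreasing_1; nra.
Qed.

Lemma sin_pos x : 0 < x -> x <= INR k -> 0 < sin (x*t).
Proof.
move=> h0 h1. have [tp [tk k1]] := theta_prop.
apply sin_gt_0; nra.
Qed.

Let c := 2 + 2 * cos t.

Lemma Ls_pos x : 1 <= x -> x <= INR k -> 0 < Ls t x.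
Proof.
move=> h0 h1. have [tp [tk k1]] := theta_prop.
have s1 : 0 < sin t by rewrite -(Rmult_1_l t); apply sin_pos; lra.
apply Rdiv_lt_0_compat; last by apply D_pos; lra.
have := sin_pos x ltac:(lra) h1. nra.
Qed.

Lemma Rs_pos x : 1 <= x -> x <= INR k -> 0 < Rs t x.
Proof.
move=> h0 h1. have [tp [tk k1]] := theta_prop.
have s1 : 0 < sin t by rewrite -(Rmult_1_l t); apply sin_pos; lra.
apply Rdiv_lt_0_compat.
- have := sin_pos x ltac:(lra) h1. nra.
- have := D_pos (x-1) ltac:(lra) ltac:(lra). by replace (x-1+1) with x by ring.
Qed.

Lemma LR1 x : 1 <= x -> x <= INR k -> Ls t x + Rs t x = Ls t x * Rs t x.
Proof.
move=> h0 h1. apply LR_sum.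
- have := D_pos x ltac:(lra) h1; lra.
- have := D_pos (x-1) ltac:(lra) ltac:(lra). replace (x-1+1) with x by ring. lra.
Qed.

Lemma LRc x : 0 <= x -> x <= INR k -> Ls t x + Rs t (x+1) = c.
Proof. move=> h0 h1. apply LR_c. have := D_pos x h0 h1. lra. Qed.

Lemma Lk : Ls t (INR k) = c.
Proof.
have [tp [tk k1]] := theta_prop.
rewrite -(LRc (INR k)); try lra.
rewrite /Rs tk sin_PI. rewrite Rmult_0_r /Rdiv Rmult_0_l. ring.
Qed.

Lemma Rs1_c : Rs t 1 = c.
Proof.
have [tp [tk k1]] := theta_prop.
rewrite -(LRc 0); try lra. rewrite Rplus_0_l.
rewrite /Ls Rmult_0_l sin_0 Rmult_0_r /Rdiv Rmult_0_l. ring.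
Qed.

Lemma c_bounds : 0 <= c <= 4.
Proof. rewrite /c. have := COS_bound t. lra. Qed.

Lemma Ls_step x : 1 <= x -> x + 1 <= INR k -> Ls t x <= Ls t (x+1).
Proof.
move=> h0 h1.
have E1 := LRc x ltac:(lra) ltac:(lra).
have E2 := LR1 (x+1) ltac:(lra) h1.
have p1 := Ls_pos (x+1) ltac:(lra) h1.
have p2 := Rs_pos (x+1) ltac:(lra) h1.
have cb := c_bounds.
set L := Ls t (x+1) in E2 p1 *. set R := Rs t (x+1) in E1 E2 p2 *.
have HR : 1 < R by nra.
have Q1 : 0 <= (2*R - c)*(2*R-c) by apply Rle_0_sqr.
have Q2 : 0 <= c*(4-c) by apply Rmult_le_pos; lra.
have e : L*(R-1) = R.
{ replace (L*(R-1)) with (L*R - L) by ring. lra. }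
have : (c - R) * (R - 1) <= L * (R - 1).
{ rewrite e. move: Q1 Q2. generalize c. move=> c0 Q1 Q2. nra. }
move=> H. rewrite (_ : Ls t x = c - R); last lra.
apply Rmult_le_reg_r with (R - 1); lra.
Qed.

Lemma Ls_mono (p q : nat) : (1 <= p)%N -> (p <= q)%N -> (q <= k)%N -> Ls t (INR p) <= Ls t (INR q).
Proof.
move=> h1 h2 h3. elim: q h2 h3 => [|q IH] h2 h3.
- have : p = 0%N by lia. lia.
- case: (p =P q.+1) => [->|ne]; first lra.
  have hq : (p <= q)%N by lia.
  apply Rle_trans with (Ls t (INR q)); first by apply IH => //; lia.
  rewrite S_INR. apply Ls_step.
  + apply (le_INR 1 q); apply/leP; lia.
  + rewrite -S_INR. apply le_INR; apply/leP; lia.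
Qed.

End T.

HB.instance Definition _ := Monoid.isComLaw.Build R 0 Rplus (fun x y z => esym (Rplus_assoc x y z)) Rplus_comm Rplus_0_l.

Lemma bigmax_ge_seq (I : eqType) (s : seq I) (P : pred I) (F : I -> R) a :
  a \in s -> P a -> F a <= \big[Rmax/0]_(i <- s | P i) F i.
Proof.
elim: s => [//|b s IH]; rewrite in_cons big_cons => /orP[/eqP<-|ain] Pa.
- rewrite Pa. apply Rmax_l.
- case: ifP => _; last exact: IH. apply: Rle_trans (IH ain Pa) (Rmax_r _ _).
Qed.

Lemma bigmax_ge (I : finType) (A : {set I}) (F : I -> R) a :
  a \in A -> F a <= \big[Rmax/0]_(i in A) F i.
Proof. move=> h. by apply bigmax_ge_seq; rewrite ?mem_index_enum. Qed.

Lemma bigmax_nonneg (I : finType) (A : {set I}) (F : I -> R) :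
  0 <= \big[Rmax/0]_(i in A) F i.
Proof. elim/big_rec: _ => [|i x _ hx]; [lra| apply: Rle_trans hx (Rmax_r _ _)]. Qed.

Lemma bigmax_le (I : finType) (A : {set I}) (F : I -> R) c :
  0 <= c -> (forall i, F i <= c) -> \big[Rmax/0]_(i in A) F i <= c.
Proof. move=> h0 h. elim/big_rec: _ => [//|i x _ hx]. by apply Rmax_lub. Qed.

Lemma bigmin_le_seq (I : eqType) (s : seq I) (F : I -> R) x0 a :
  a \in s -> \big[Rmin/x0]_(i <- s) F i <= F a.
Proof.
elim: s => [//|b s IH]; rewrite in_cons big_cons => /orP[/eqP<-|ain].
- apply Rmin_l.
- apply: Rle_trans (Rmin_r _ _) (IH ain).
Qed.

Lemma bigmin_le (I : finType) (F : I -> R) x0 a :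
  \big[Rmin/x0]_(i : I) F i <= F a.
Proof. by apply bigmin_le_seq; rewrite ?mem_index_enum. Qed.

Lemma bigmin_ge (I : finType) (F : I -> R) x0 c :
  c <= x0 -> (forall i, c <= F i) -> c <= \big[Rmin/x0]_(i : I) F i.
Proof. move=> h0 h. elim/big_rec: _ => [//|i x _ hx]. by apply Rmin_glb. Qed.

Lemma sum_two (I : finType) (F : I -> R) a b : a != b ->
  (forall i, i != a -> i != b -> F i = 0) ->
  \big[Rplus/0]_(i : I) F i = F a + F b.
Proof.
move=> ab h. rewrite (bigD1 a) //= (bigD1 b) /=; last by rewrite eq_sym ab.
rewrite big1; first ring. move=> i /andP[ia ib]. by apply h.
Qed.

Lemma sum_le (I : finType) (F G : I -> R) :
  (forall i, F i <= G i) -> \big[Rplus/0]_(i : I) F i <= \big[Rplus/0]_(i : I) G i.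
Proof. move=> h. apply: (big_ind2 (fun x y => x <= y)) => //; [lra| move=> *; lra]. Qed.

Lemma sum_mulr (I : finType) (F : I -> R) c :
  \big[Rplus/0]_(i : I) (F i * c) = (\big[Rplus/0]_(i : I) F i) * c.
Proof. apply: (big_ind2 (fun x y => x = y * c)) => //; [ring| move=> ? ? ? ? -> ->; ring]. Qed.

Lemma odd_sub2 n : (2 <= n)%N -> odd (n - 2) = odd n.
Proof. case: n => [|[|n]] // _. by rewrite !subSS subn0 /= negbK. Qed.

Section N.
Variable k : nat.
Hypothesis hk : (0 < k)%N.
Let c := 2 + 2 * cos (theta k).

Lemma node_range (j : 'I_(2*k)) : 1 <= INR (j %/ 2 + 1) /\ INR (j %/ 2 + 1) <= INR k.
Proof.
split.
- apply (le_INR 1); apply/leP; lia.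
- apply le_INR; apply/leP; have := ltn_ord j; lia.
Qed.

Lemma ex_pos (j : 'I_(2*k)) : 0 < ex_l j /\ 0 < ex_r j.
Proof.
have [h1 h2] := node_range j. rewrite ex_lE ex_rE.
split; [exact: Ls_pos | exact: Rs_pos].
Qed.

Lemma ex_LR (j : 'I_(2*k)) : ex_l j + ex_r j = ex_l j * ex_r j.
Proof. have [h1 h2] := node_range j. rewrite ex_lE ex_rE. exact: LR1. Qed.

Lemma ex_mono (j1 j2 : 'I_(2*k)) : (j1 <= j2)%N -> ex_l j1 <= ex_l j2 /\ ex_r j2 <= ex_r j1.
Proof.
move=> h.
have hl : ex_l j1 <= ex_l j2.
{ rewrite !ex_lE. apply Ls_mono => //; try lia. have := ltn_ord j2; lia. }
split => //.
have e1 := ex_LR j1. have e2 := ex_LR j2.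
have [p1 q1] := ex_pos j1. have [p2 q2] := ex_pos j2.
set L1 := ex_l j1 in hl e1 p1 *. set L2 := ex_l j2 in hl e2 p2 *.
set R1 := ex_r j1 in e1 q1 *. set R2 := ex_r j2 in e2 q2 *.
clearbody L1 L2 R1 R2.
have f1 : (R1 - 1) * (L1 - 1) = 1 by lra.
have f2 : (R2 - 1) * (L2 - 1) = 1 by lra.
have g1 : 1 < L1 by nra.
have g2 : 0 < R1 - 1.
{ apply Rnot_le_lt => H. have : (1 - R1) * (L1 - 1) >= 0.
  { apply Rle_ge, Rmult_le_pos; lra. } lra. }
apply Rnot_lt_le => H.
have a1 : 0 < (R2 - R1) * (L2 - 1) by apply Rmult_lt_0_compat; lra.
have a2 : 0 <= (R1 - 1) * (L2 - L1) by apply Rmult_le_pos; lra.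
lra.
Qed.

Lemma ex_r_le (j : 'I_(2*k)) : ex_r j <= c.
Proof.
have z : (0 < 2 * k)%N by lia.
have := (ex_mono (Ordinal z) j (leq0n _)).2.
rewrite !ex_rE /=. by rewrite (Rs1_c _ hk).
Qed.

Lemma ex_l_le (j : 'I_(2*k)) : ex_l j <= c.
Proof.
have z : (2*k - 1 < 2 * k)%N by lia.
have := (ex_mono j (Ordinal z) ltac:(have := ltn_ord j; simpl; lia)).1.
rewrite !ex_lE /= (_ : ((2*k-1) %/ 2 + 1)%N = k) ?(Lk _ hk) //. lia.
Qed.

Lemma class_bound (X Om : {set 'I_(2*k)}) (top : 'I_(2*k)) :
  top \in X -> (top %/ 2 + 1 = k)%N ->
  (forall j j' : 'I_(2*k), j \in X -> (2 <= j)%N -> val j' = (j - 2)%N -> j' \in X) ->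
  c <= \big[Rmax/0]_(i in X :&: ~: Om) ex_l i + \big[Rmax/0]_(i in X :&: Om) ex_r i.
Proof.
move=> topX htop hX.
case: (boolP [exists i, i \in X :&: Om]) => [/existsP [i0 hi0] | hno].
- pose P := fun n => [exists i : 'I_(2*k), (val i == n) && (i \in X :&: Om)].
  have exP : exists n, P n.
  { exists (val i0); apply/existsP; exists i0; by rewrite eqxx hi0. }
  case: (ex_minnP exP) => m /existsP [im /andP [/eqP him imin]] hmin.
  simpl in him. case: (ltnP m 2) => hm.
  + have e : ex_r im = c.
    { rewrite ex_rE (_ : (im %/2 + 1 = 1)%N); last lia.
      change (INR 1) with 1. exact: Rs1_c. }
    have := @bigmax_ge _ (X :&: Om) (@ex_r k) im imin. have := @bigmax_nonneg _ (X :&: ~: Om) (@ex_l k). lra.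
  + have lt' : (m - 2 < 2*k)%N by have := ltn_ord im; lia.
    pose j' := Ordinal lt'.
    move: (imin); rewrite inE => /andP [imX imOm].
    have j'X : j' \in X by apply: (hX im) => //=; lia.
    have j'nOm : j' \notin Om.
    { apply/negP => h. have : P (m - 2)%N.
      { apply/existsP; exists j'; by rewrite /= eqxx inE j'X h. }
      move/hmin. lia. }
    have l' : ex_l j' <= \big[Rmax/0]_(i in X :&: ~: Om) ex_l i.
    { apply bigmax_ge. by rewrite inE j'X inE j'nOm. }
    have r' := @bigmax_ge _ (X :&: Om) (@ex_r k) im imin.
    have [h1 h2] := node_range j'.
    have e : ex_l j' + ex_r im = c.
    { rewrite ex_lE ex_rE (_ : (im %/ 2 + 1 = (j' %/ 2 + 1).+1)%N); last by rewrite /=; lia.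
      rewrite S_INR. apply LRc => //; lra. }
    lra.
- have tO : top \notin Om.
  { apply/negP => h. move/existsP: hno; apply. exists top. by rewrite inE topX h. }
  have l' : ex_l top <= \big[Rmax/0]_(i in X :&: ~: Om) ex_l i.
  { apply bigmax_ge. by rewrite inE topX inE tO. }
  have e : ex_l top = c by rewrite ex_lE htop (Lk _ hk).
  have := @bigmax_nonneg _ (X :&: Om) (@ex_r k). lra.
Qed.

End N.

Section M.
Variable k : nat.
Hypothesis hk : (0 < k)%N.
Let c := 2 + 2 * cos (theta k).

Lemma odd_neq_even : odd_nodes k != even_nodes k.
Proof.
have z : (0 < 2 * k)%N by lia.
apply/eqP => e. have : Ordinal z \in odd_nodes k by rewrite inE.
by rewrite e inE.
Qed.

Lemma setC_odd : ~: odd_nodes k = even_nodes k.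
Proof. apply/setP => j. by rewrite !inE negbK. Qed.
Lemma setC_even : ~: even_nodes k = odd_nodes k.
Proof. apply/setP => j. by rewrite !inE. Qed.

Lemma alt_sum (F : {set 'I_(2*k)} -> R) :
  \big[Rplus/0]_(S : {set 'I_(2*k)}) (alt_schedule S * F S)
  = 1/2 * F (odd_nodes k) + 1/2 * F (even_nodes k).
Proof.
have ne := odd_neq_even.
rewrite (@sum_two _ _ (odd_nodes k) (even_nodes k) ne).
- by rewrite /alt_schedule eqxx eq_sym (negbTE ne) eqxx.
- move=> S h1 h2. rewrite /alt_schedule (negbTE h1) (negbTE h2). ring.
Qed.

Lemma alt_sched : is_schedule (@alt_schedule k).
Proof.
split.
- move=> S. rewrite /alt_schedule. case: ifP => _; first lra. case: ifP => _; lra.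
- have := alt_sum (fun _ => 1). under eq_bigr do rewrite Rmult_1_r. move=> ->. lra.
Qed.

Lemma alt_cut Om : c <= cut_value (@ex_l k) (@ex_r k) (@alt_schedule k) Om.
Proof.
rewrite /cut_value alt_sum setC_odd setC_even.
have zA : (2*k - 2 < 2 * k)%N by lia.
have zB : (2*k - 1 < 2 * k)%N by lia.
have gA := class_bound _ hk (odd_nodes k) Om (Ordinal zA).
have gB := class_bound _ hk (even_nodes k) Om (Ordinal zB).
have : c <= \big[Rmax/0]_(i in odd_nodes k :&: ~: Om) ex_l i + \big[Rmax/0]_(i in odd_nodes k :&: Om) ex_r i.
{ apply gA.
  - rewrite inE /= (_ : (2 * k - 2 = 2 * (k - 1))%N); last lia. by rewrite mul2n odd_double.
  - rewrite /=. lia.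
  - move=> j j'; rewrite !inE => jX h2 e. by rewrite e odd_sub2. }
have : c <= \big[Rmax/0]_(i in even_nodes k :&: ~: Om) ex_l i + \big[Rmax/0]_(i in even_nodes k :&: Om) ex_r i.
{ apply gB.
  - rewrite inE /= (_ : (2 * k - 1 = (2 * (k - 1)).+1)%N); last lia. by rewrite /= mul2n odd_double.
  - rewrite /=. lia.
  - move=> j j'; rewrite !inE => jX h2 e. by rewrite e odd_sub2. }
lra.
Qed.

Lemma rate_le lam : is_schedule lam -> rate (@ex_l k) (@ex_r k) lam <= c.
Proof.
move=> [h0 h1].
rewrite /rate.
apply: Rle_trans (@bigmin_le _ (cut_value (@ex_l k) (@ex_r k) lam) _ setT) _.
rewrite /cut_value.
apply: Rle_trans (@sum_le _ _ (fun S => lam S * c) _) _.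
- move=> S. apply Rmult_le_compat_l => //.
  rewrite big_pred0; last by move=> i; rewrite !inE andbF.
  rewrite Rplus_0_l. apply bigmax_le; first by have := c_bounds k; rewrite /c; lra.
  exact: ex_r_le.
- rewrite sum_mulr h1. lra.
Qed.

Lemma rate_alt : rate (@ex_l k) (@ex_r k) (@alt_schedule k) = c.
Proof.
apply Rle_antisym; first exact: rate_le alt_sched.
apply bigmin_ge; [exact: alt_cut | move=> Om; exact: alt_cut].
Qed.

Lemma isCn : is_Cn (@ex_l k) (@ex_r k) c.
Proof.
split; first by exists (@alt_schedule k); split; [exact: alt_sched | exact: rate_alt].
exact: rate_le.
Qed.

Lemma Cn_eq : Cn_net (@ex_l k) (@ex_r k) = c.
Proof.
rewrite /Cn_net.
have := epsilon_spec (inhabits 0) (is_Cn (@ex_l k) (@ex_r k)) (ex_intro _ c isCn).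
move: (epsilon _ _) => c' [[lam [hl hr]] hall].
have [[lam0 [h0 e0]] hall0] := isCn.
have := hall0 lam hl. have := hall lam0 h0. rewrite hr e0. lra.
Qed.

Lemma C1_eq : C1_net (@ex_l k) (@ex_r k) = 1.
Proof.
rewrite /C1_net.
have e : forall j : 'I_(2*k), C1_link (ex_l j) (ex_r j) = 1.
{ move=> j. have := ex_LR _ hk j. have [p q] := ex_pos _ hk j. rewrite /C1_link => ->. field. lra. }
under eq_bigr do rewrite e.
have z : (0 < 2 * k)%N by lia.
apply Rle_antisym.
- elim/big_rec: _ => [|i x _ hx]; [lra | by apply Rmax_lub; lra].
- have := @bigmax_ge_seq _ (index_enum 'I_(2*k)) xpredT (fun _ => 1) (Ordinal z).
  rewrite mem_index_enum. by apply.
Qed.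

End M.

Theorem mainTheorem6 (k : nat) (hk : (0 < k)%N) :
  (forall j : 'I_(2 * k), 0 < ex_l j /\ 0 < ex_r j) /\
  (forall j1 j2 : 'I_(2 * k), (j1 <= j2)%N ->
      ex_l j1 <= ex_l j2 /\ ex_r j2 <= ex_r j1) /\
  (forall j : 'I_(2 * k), C1_link (ex_l j) (ex_r j) = 1) /\
  C1_net (@ex_l k) (@ex_r k) = 1 /\
  Cn_net (@ex_l k) (@ex_r k) = 2 + 2 * cos (theta k) /\
  C1_net (@ex_l k) (@ex_r k) / Cn_net (@ex_l k) (@ex_r k)
     = 1 / (2 + 2 * cos (2 * PI / INR (2 * k + 2)%N)) /\
  is_schedule (@alt_schedule k) /\
  rate (@ex_l k) (@ex_r k) (@alt_schedule k) = 2 + 2 * cos (theta k).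
Proof.
split; first exact: ex_pos.
split; first exact: ex_mono.
split.
{ move=> j. have := ex_LR _ hk j. have [p q] := ex_pos _ hk j. rewrite /C1_link => ->. field. lra. }
split; first exact: C1_eq.
split; first exact: Cn_eq.
split; first by rewrite (C1_eq _ hk) (Cn_eq _ hk).
split; first exact: alt_sched.
exact: rate_alt.
Qed.
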